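(* (Partial complement.) Let $V_1,V_2$ be disjoint finite vertex sets, $E\subseteq\{\{u,w\}:u\in V_1,w\in V_2\}$, and let $S_1\subseteq V_1$, $S_2\subseteq V_2$ be nonempty subsets. Let $s_1,s_2$ be two additional vertices and consider either of the graphs (a) on $V_1\cup V_2\cup\{s_1,s_2\}$ with edges $E\cup\{\{s_1,s_2\}\}\cup\{\{v,s_2\}:v\in S_1\}\cup\{\{w,s_1\}:w\in S_2\}$, or (b) on $V_1\cup V_2\cup\{s_1,s_2\}$ with edges $E\cup\{\{s_1,s_2\}\}\cup\{\{v,s_1\}:v\in S_1\}\cup\{\{w,s_2\}:w\in S_2\}$. Then the corresponding graph state can be transformed by LOCC (single-qubit Pauli measurements on $s_1$ and $s_2$ followed by outcome-dependent local unitary corrections on the remaining qubits) into the graph state of the graph on $V_1\cup V_2$ whose edge set is obtained from $E$ by complementing exactly the pairs in $S_1\times S_2$, namely $$\big(E\setminus\{\{u,w\}:u\in S_1,w\in S_2\}\big)\;\cup\;\{\{u,w\}:u\in S_1,\ w\in S_2,\ \{u,w\}\notin E\};$$ in particular every inter-link of $E$ incident to a vertex outside $S_1\cup S_2$ is retained unchanged.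
   Context: For a simple graph $G=(V,E)$, the graph state $|G\rangle$ is the $|V|$-qubit state $\prod_{\{a,b\}\in E} CZ_{ab}\,|+\rangle^{\otimes |V|}$, one qubit per vertex. Two QLANs are modeled by disjoint vertex sets $V_1,V_2$; inter-links are edges between $V_1$ and $V_2$. LOCC means local operations on individual qubits together with classical communication. *)

(* Defs.v *)
From HB Require Import structures.
From mathcomp Require Import all_boot all_order all_algebra all_field.
Set Implicit Arguments. Unset Strict Implicit. Unset Printing Implicit Defensive.
Import Order.TTheory GRing.Theory Num.Theory.
Local Open Scope ring_scope.

(* Computational basis of the qubits indexed by T: bit strings x : T -> bool.
   A (not necessarily normalized) state is an amplitude function. *)
Definition state (T : finType) := {ffun T -> bool} -> algC.

(* Unnormalized graph state |G> = prod_{e in E} CZ_e |+>^T, with the graph given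
   by its set of edges (2-element subsets of T):
   <x|G> = (-1)^(number of edges both of whose endpoints are 1 in x). *)
Definition gstate (T : finType) (E : {set {set T}}) : state T :=
  fun x => (-1) ^+ #|[set f in E | f \subset [set v | x v]]|.

(* Single-qubit operators as 2x2 matrices indexed by bool (row, column). *)
Definition op1 := bool -> bool -> algC.
Definition id1 : op1 := fun a b => (a == b)%:R.
Definition unitary1 (U : op1) : Prop :=
  forall a b, \sum_(c : bool) (U c a)^* * U c b = (a == b)%:R.

Definition local_apply (T : finType) (U : T -> op1) (psi : state T) : state T :=
  fun x => \sum_(y : {ffun T -> bool}) (\prod_(v : T) U v (x v) (y v)) * psi y.

Inductive pauli := PX | PY | PZ.
Definition pauli_op (P : pauli) : op1 :=
  match P with
  | PX => fun a b => (a != b)%:R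
  | PY => fun a b => (a != b)%:R * (if a then 'i else - 'i)
  | PZ => fun a b => (a == b)%:R * (-1) ^+ a
  end.
(* Projector onto the (-1)^m eigenspace of P: (I + (-1)^m P)/2. *)
Definition proj (P : pauli) (m : bool) : op1 :=
  fun a b => (id1 a b + (-1) ^+ m * pauli_op P a b) / 2%:R.
(* A (unnormalized) eigenvector of P for the eigenvalue (-1)^m. *)
Definition eigvec (P : pauli) (m : bool) : bool -> algC :=
  match P with
  | PX => fun a => if a then (-1) ^+ m else 1
  | PY => fun a => if a then (-1) ^+ m * 'i else 1
  | PZ => fun a => (a == m)%:R
  end.

(* The graph state of G (on qubits T) can be turned by LOCC into the graph state
   of G' on the qubits other than s1, s2, by Pauli measurements of s1 and s2
   followed by outcome-dependent local unitary corrections on the remaining qubits: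
   for every outcome (m1,m2) occurring with nonzero probability, after the
   corrections the global state is (up to a nonzero scalar)
   |eig_{P1,m1}>_{s1} (x) |eig_{P2,m2}>_{s2} (x) |G'>_{T \ {s1,s2}}. *)
Definition pauli_LOCC (T : finType) (G : {set {set T}}) (s1 s2 : T)
    (G' : {set {set T}}) : Prop :=
  exists (P1 P2 : pauli), forall m1 m2 : bool,
    let phi := local_apply (fun v => if v == s1 then proj P1 m1
                                     else if v == s2 then proj P2 m2 else id1)
                           (gstate G) in
    (exists x, phi x != 0) ->
    exists (U : T -> op1) (c : algC),
      [/\ forall v, unitary1 (U v),
          U s1 = id1, U s2 = id1, c != 0 &
          forall x, local_apply U phi x
                    = c * (eigvec P1 m1 (x s1) * eigvec P2 m2 (x s2) * gstate G' x)].

Definition graphA (T : finType) (E : {set {set T}}) (S1 S2 : {set T}) (s1 s2 : T) :=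
  E :|: [set [set s1; s2]] :|: [set [set v; s2] | v in S1] :|: [set [set w; s1] | w in S2].
Definition graphB (T : finType) (E : {set {set T}}) (S1 S2 : {set T}) (s1 s2 : T) :=
  E :|: [set [set s1; s2]] :|: [set [set v; s1] | v in S1] :|: [set [set w; s2] | w in S2].
Definition partial_complement (T : finType) (E : {set {set T}}) (S1 S2 : {set T}) :=
  (E :\: [set [set u; w] | u in S1, w in S2])
    :|: [set [set u; w] | u in S1, w in S2 & [set u; w] \notin E].

(* Main.v *)
Require Import Defs.
From HB Require Import structures.
From mathcomp Require Import all_boot all_order all_algebra all_field.
From mathcomp Require Import ring.
From Stdlib Require Import FunctionalExtensionality.
Set Implicit Arguments. Unset Strict Implicit. Unset Printing Implicit Defensive.
Import Order.TTheory GRing.Theory Num.Theory.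
Local Open Scope ring_scope.

Lemma neq_ffun (T : finType) (y x : {ffun T -> bool}) :
  y != x -> exists v, y v != x v.
Proof.
move=> ne; apply/existsP; apply: contraNT ne; rewrite negb_exists => /forallP H.
by apply/eqP/ffunP => v; apply/eqP; have := H v; rewrite negbK.
Qed.

Lemma diag_apply (T : finType) (d : T -> bool -> algC) (psi : state T) x :
  local_apply (fun v a b => (a == b)%:R * d v a) psi x = (\prod_v d v (x v)) * psi x.
Proof.
rewrite /local_apply (bigD1 x) //=.
rewrite [X in _ + X]big1 ?addr0.
  by congr (_ * _); apply: eq_bigr => v _; rewrite eqxx mul1r.
move=> y ne; have [v hv] := neq_ffun ne.
rewrite eq_sym in hv.
by rewrite (bigD1 v) //= (negbTE hv) !mul0r.
Qed.

Definition upd (T : finType) (x : {ffun T -> bool}) (s1 s2 : T) (b1 b2 : bool)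
  : {ffun T -> bool} := [ffun v => if v == s1 then b1 else if v == s2 then b2 else x v].

Lemma upd1 (T : finType) x (s1 s2 : T) b1 b2 : upd x s1 s2 b1 b2 s1 = b1.
Proof. by rewrite ffunE eqxx. Qed.
Lemma upd2 (T : finType) x (s1 s2 : T) b1 b2 : s1 != s2 -> upd x s1 s2 b1 b2 s2 = b2.
Proof. by move=> ne; rewrite ffunE eq_sym (negbTE ne) eqxx. Qed.

Lemma eq_upd (T : finType) x (s1 s2 : T) b1 b2 y : s1 != s2 ->
  (y == upd x s1 s2 b1 b2) = [&& y s1 == b1, y s2 == b2 & y == upd x s1 s2 (y s1) (y s2)].
Proof.
move=> ne; apply/idP/idP.
  by move/eqP=> ->; rewrite upd1 upd2 // !eqxx.
by case/and3P=> /eqP -> /eqP ->.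
Qed.

Lemma sum_pred1 (T : finType) (u : T) (F : T -> algC) :
  \sum_y (y == u)%:R * F y = F u.
Proof.
rewrite (bigD1 u) //= eqxx mul1r big1 ?addr0 // => y /negPf ->; by rewrite mul0r.
Qed.

Lemma prod_delta (T : finType) (x y : {ffun T -> bool}) (s1 s2 : T) : s1 != s2 ->
  \prod_(v | (v != s1) && (v != s2)) id1 (x v) (y v) = (y == upd x s1 s2 (y s1) (y s2))%:R.
Proof.
move=> ne; case: eqP => [E|/eqP NE].
  apply: big1 => v /andP[h1 h2]; rewrite /id1 E ffunE (negbTE h1) (negbTE h2) eqxx //.
have [v hv] := neq_ffun NE.
have h1 : v != s1 by apply: contraNneq hv => ->; rewrite upd1.
have h2 : v != s2 by apply: contraNneq hv => ->; rewrite upd2.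
rewrite (bigD1 v) /= ?h1 ?h2 // /id1.
move: hv; rewrite ffunE (negbTE h1) (negbTE h2) eq_sym => /negbTE ->.
by rewrite mul0r.
Qed.

Lemma sum_two (T : finType) (s1 s2 : T) (p1 p2 : op1) (F : state T) (x : {ffun T -> bool}) : s1 != s2 ->
  \sum_(y : {ffun T -> bool}) (\prod_v (if v == s1 then p1 else if v == s2 then p2 else id1) (x v) (y v)) * F y
  = \sum_(b1 : bool) \sum_(b2 : bool) p1 (x s1) b1 * p2 (x s2) b2 * F (upd x s1 s2 b1 b2).
Proof.
move=> ne.
transitivity (\sum_(b1 : bool) \sum_(b2 : bool) \sum_y
   (y == upd x s1 s2 b1 b2)%:R * (p1 (x s1) b1 * p2 (x s2) b2 * F y)); last first.
  by apply: eq_bigr => b1 _; apply: eq_bigr => b2 _; rewrite sum_pred1.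
under [RHS]eq_bigr do rewrite exchange_big /=.
rewrite [RHS]exchange_big /=.
apply: eq_bigr => y _.
rewrite (bigD1 s1) //= eqxx (bigD1 s2) /=; last by rewrite eq_sym.
rewrite (eq_sym s2 s1) (negbTE ne) eqxx.
rewrite (eq_bigl (fun v => (v != s1) && (v != s2))); last first.
  by move=> v; rewrite andbC.
have -> : \prod_(v | (v != s1) && (v != s2))
   (if v == s1 then p1 else if v == s2 then p2 else id1) (x v) (y v)
   = \prod_(v | (v != s1) && (v != s2)) id1 (x v) (y v).
  by apply: eq_bigr => v /andP[/negbTE -> /negbTE ->].
rewrite prod_delta //.
under eq_bigr do under eq_bigr do rewrite eq_upd //.
rewrite !big_bool /=.
case: (y s1); case: (y s2); case: (y == _) => /=; rewrite ?mul0r ?mul1r ?addr0 ?add0r ?mulr1 ?mulr0 //.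
all: exact: mul0r.
Qed.

Lemma scal (m1 m2 x1 x2 a b : bool) (g : algC) :
  (-1) ^+ (m1 && a) * (-1) ^+ (m2 && b) *
  (\sum_(b1 : bool) \sum_(b2 : bool) proj PX m1 x1 b1 * proj PX m2 x2 b2 *
     (g * (-1) ^+ (b1 && b2) * (-1) ^+ (b2 && a) * (-1) ^+ (b1 && b)))
  = (-1) ^+ (m1 && m2) / 2%:R * (eigvec PX m1 x1 * eigvec PX m2 x2 * (g * (-1) ^+ (a && b))).
Proof.
rewrite !big_bool /proj /id1 /=.
have h2 : (2%:R : algC) != 0 by rewrite pnatr_eq0.
by case: m1; case: m2; case: x1; case: x2; case: a; case: b => /=; field.
Qed.

Lemma unitZ (k : bool) : unitary1 (fun a b => (a == b)%:R * (-1) ^+ (k && a)).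
Proof.
move=> a b; rewrite big_bool /=.
by case: a; case: b; case: k => /=;
  rewrite ?conjC1 ?conjC0 ?conjCN1 ?rmorph1 ?rmorph0 ?rmorphN1 ?rmorphM /=; ring.
Qed.

Lemma card_sum (T : finType) (A : {set T}) : #|A| = (\sum_v (v \in A : nat))%N.
Proof.
by rewrite -sum1_card big_mkcond /=; apply: eq_bigr => v _; case: (v \in A).
Qed.

Lemma prod_sign (T : finType) (f : T -> nat) :
  \prod_v ((-1) ^+ f v : algC) = (-1) ^+ (\sum_v f v)%N.
Proof.
by rewrite (big_morph (fun n => (-1) ^+ n : algC) (fun m n => exprD (-1) m n) (expr0 _)).
Qed.

Lemma sign_bmul (m : bool) (n : nat) : ((-1) ^+ (m * n)%N : algC) = (-1) ^+ (m && odd n).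
Proof. by case: m; rewrite ?mul1n ?mul0n // signr_odd. Qed.

Lemma prod_corr (T : finType) (R1 R2 : {set T}) (m1 m2 : bool) (x : {ffun T -> bool}) :
  [disjoint R1 & R2] ->
  \prod_v ((-1) ^+ ((if v \in R1 then m1 else if v \in R2 then m2 else false) && x v) : algC)
  = (-1) ^+ (m1 && odd #|R1 :&: [set v | x v]|) * (-1) ^+ (m2 && odd #|R2 :&: [set v | x v]|).
Proof.
move=> dis.
rewrite -!sign_bmul -exprD prod_sign !card_sum !big_distrr -big_split /=.
congr (_ ^+ _); apply: eq_bigr => v _; rewrite !inE.
case h1: (v \in R1); case h2: (v \in R2) => //=.
  by move: (disjointFr dis h1); rewrite h2.
all: by case: m1; case: m2; case: (x v).
Qed.

Definition cntb (T : finType) (R : {set T}) (y : {ffun T -> bool}) :=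
  odd #|R :&: [set v | y v]|.

Lemma cntb_upd (T : finType) (R : {set T}) (s1 s2 : T) x b1 b2 :
  s1 \notin R -> s2 \notin R -> cntb R (upd x s1 s2 b1 b2) = cntb R x.
Proof.
move=> h1 h2; rewrite /cntb.
suff -> : R :&: [set v | upd x s1 s2 b1 b2 v] = R :&: [set v | x v] by [].
apply/setP => z; rewrite !inE ffunE.
case zR: (z \in R) => //=.
have -> : (z == s1) = false by apply/negbTE; apply: contraNneq h1 => <-.
by have -> : (z == s2) = false by apply/negbTE; apply: contraNneq h2 => <-.
Qed.

Lemma gen_LOCC (T : finType) (G G' : {set {set T}}) (s1 s2 : T) (R1 R2 : {set T})
    (gE : state T) :
  s1 != s2 -> s1 \notin R1 -> s2 \notin R1 -> s1 \notin R2 -> s2 \notin R2 ->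
  [disjoint R1 & R2] ->
  (forall x b1 b2, gE (upd x s1 s2 b1 b2) = gE x) ->
  (forall y, gstate G y = gE y * (-1) ^+ (y s1 && y s2) * (-1) ^+ (y s2 && cntb R1 y)
                           * (-1) ^+ (y s1 && cntb R2 y)) ->
  (forall y, gstate G' y = gE y * (-1) ^+ (cntb R1 y && cntb R2 y)) ->
  pauli_LOCC G s1 s2 G'.
Proof.
move=> ne h11 h21 h12 h22 dis hE hG hG'.
exists PX, PX => m1 m2 phi _.
exists (fun v a b => (a == b)%:R *
   (-1) ^+ ((if v \in R1 then m1 else if v \in R2 then m2 else false) && a)).
exists ((-1) ^+ (m1 && m2) / 2%:R).
split.
- by move=> v; apply: unitZ.
- rewrite (negbTE h11) (negbTE h12).
  by apply: functional_extensionality => a; apply: functional_extensionality => b;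
    rewrite /id1 /= expr0 mulr1.
- rewrite (negbTE h21) (negbTE h22).
  by apply: functional_extensionality => a; apply: functional_extensionality => b;
    rewrite /id1 /= expr0 mulr1.
- by rewrite mulf_neq0 ?signr_eq0 // invr_eq0 pnatr_eq0.
move=> x.
rewrite (diag_apply (fun v a => (-1) ^+ ((if v \in R1 then m1 else if v \in R2 then m2 else false) && a))).
rewrite prod_corr //.
rewrite /phi /local_apply sum_two //.
have -> : \sum_(b1 : bool) \sum_(b2 : bool)
    proj PX m1 (x s1) b1 * proj PX m2 (x s2) b2 * gstate G (upd x s1 s2 b1 b2)
  = \sum_(b1 : bool) \sum_(b2 : bool) proj PX m1 (x s1) b1 * proj PX m2 (x s2) b2 *
     (gE x * (-1) ^+ (b1 && b2) * (-1) ^+ (b2 && cntb R1 x) * (-1) ^+ (b1 && cntb R2 x)).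
  apply: eq_bigr => b1 _; apply: eq_bigr => b2 _.
  by rewrite hG hE upd1 upd2 // !cntb_upd.
by rewrite hG' scal.
Qed.

Lemma disjP (T : finType) (A B : {set T}) :
  (forall f, f \in A -> f \in B -> False) -> [disjoint A & B].
Proof.
move=> H; rewrite disjoints_subset; apply/subsetP => f fA; rewrite inE.
by apply/negP => fB; apply: (H f).
Qed.

Lemma sgnU (T : finType) (A B : {set {set T}}) y :
  [disjoint A & B] -> gstate (A :|: B) y = gstate A y * gstate B y.
Proof.
move=> dis; rewrite /gstate -exprD.
set P := [set v | y v].
have -> : [set f in A :|: B | f \subset P] = [set f in A | f \subset P] :|: [set f in B | f \subset P].
  by apply/setP => f; rewrite !inE andb_orl.
rewrite cardsU.
have -> : [set f in A | f \subset P] :&: [set f in B | f \subset P] = set0.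
  apply/setP => f; rewrite !inE; case fA: (f \in A) => //=.
  by rewrite (disjointFr dis fA) andbF.
by rewrite cards0 subn0.
Qed.

Lemma sgn1 (T : finType) (K : {set T}) y :
  gstate [set K] y = (-1) ^+ (K \subset [set v | y v]).
Proof.
rewrite /gstate; case h: (K \subset _).
  suff -> : [set f in [set K] | f \subset [set v | y v]] = [set K] by rewrite cards1.
  by apply/setP => f; rewrite !inE; case: eqP => // ->; rewrite h.
suff -> : [set f in [set K] | f \subset [set v | y v]] = set0 by rewrite cards0.
by apply/setP => f; rewrite !inE; case: eqP => // ->; rewrite h.
Qed.

Lemma sgn_star (T : finType) (S : {set T}) (t : T) y :
  t \notin S ->
  gstate [set [set v; t] | v in S] y = (-1) ^+ (y t && odd #|S :&: [set v | y v]|).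
Proof.
move=> tS; rewrite /gstate; case yt: (y t) => /=; last first.
  suff -> : [set f in [set [set v; t] | v in S] | f \subset [set v | y v]] = set0
    by rewrite cards0.
  apply/setP => f; rewrite !inE; apply/negbTE; apply/negP => /andP[/imsetP[v _ ->]].
  by move/subsetP => /(_ t); rewrite !inE eqxx orbT yt => /(_ isT).
have -> : [set f in [set [set v; t] | v in S] | f \subset [set v | y v]]
   = [set [set v; t] | v in S :&: [set v | y v]].
  apply/setP => f; rewrite !inE; apply/andP/imsetP.
    case=> /imsetP[v vS ->] /subsetP sub; exists v => //.
    by rewrite !inE vS /=; have := sub v; rewrite !inE eqxx => /(_ isT).
  case=> v; rewrite !inE => /andP[vS yv] ->; split; first by apply/imsetP; exists v.
  by apply/subsetP => z; rewrite !inE => /orP[] /eqP ->.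
rewrite signr_odd card_in_imset //.
move=> u w; rewrite !inE => /andP[uS _] /andP[wS _] E.
have : u \in [set w; t] by rewrite -E !inE eqxx.
rewrite !inE => /orP[/eqP //|/eqP ut]; by move: tS; rewrite -ut uS.
Qed.

Lemma sgn_symdiff (T : finType) (A B : {set {set T}}) y :
  gstate ((A :\: B) :|: (B :\: A)) y = gstate A y * gstate B y.
Proof.
have dAB : forall C D : {set {set T}}, [disjoint C :\: D & C :&: D].
  by move=> C D; apply: disjP => f; rewrite !inE => /andP[/negbTE-> _] /andP[].
rewrite sgnU; last by apply: disjP => f; rewrite !inE => /andP[/negbTE-> _] /andP[].
have eA : A = (A :\: B) :|: (A :&: B) by apply/setP => f; rewrite !inE; case: (f \in A); case: (f \in B).
have eB : B = (B :\: A) :|: (A :&: B) by apply/setP => f; rewrite !inE; case: (f \in A); case: (f \in B).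
transitivity (gstate ((A :\: B) :|: (A :&: B)) y * gstate ((B :\: A) :|: (A :&: B)) y);
  last by rewrite -eA -eB.
rewrite !sgnU ?dAB //; last by rewrite setIC dAB.
rewrite mulrACA.
have -> : gstate (A :&: B) y * gstate (A :&: B) y = 1.
  by rewrite /gstate -expr2 -exprM mulnC exprM sqrrN expr1n expr1n.
by rewrite mulr1.
Qed.

Lemma sgn_K (T : finType) (S1 S2 : {set T}) y : [disjoint S1 & S2] ->
  gstate [set [set u; w] | u in S1, w in S2] y
  = (-1) ^+ (odd #|S1 :&: [set v | y v]| && odd #|S2 :&: [set v | y v]|).
Proof.
move=> dis; rewrite /gstate.
set X := [set v | y v].
have -> : [set f in [set [set u; w] | u in S1, w in S2] | f \subset X]
   = [set [set u; w] | u in S1 :&: X, w in S2 :&: X].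
  apply/setP => f; rewrite !inE; apply/andP/imset2P.
    case=> /imset2P[u w uS wS ->] /subsetP sub; exists u w.
    - by rewrite !inE uS /=; have := sub u; rewrite !inE eqxx => /(_ isT).
    - by rewrite !inE wS /=; have := sub w; rewrite !inE eqxx orbT => /(_ isT).
    - by [].
  case=> u w; rewrite !inE => /andP[uS yu] /andP[wS yw] ->; split.
    by apply/imset2P; exists u w.
  by apply/subsetP => z; rewrite !inE => /orP[] /eqP ->.
rewrite curry_imset2X card_in_imset ?cardsX -?oddM ?signr_odd //.
move=> [u w] [u' w']; rewrite !inE /= => /andP[/andP[uS _] /andP[wS _]]
   /andP[/andP[uS' _] /andP[wS' _]] E.
have neq : forall a b, a \in S1 -> b \in S2 -> (a == b) = false.
  by move=> a b aS bS; apply/negbTE; apply: contraTneq bS => <-; rewrite (disjointFr dis aS).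
have : u \in [set u'; w'] by rewrite -E !inE eqxx.
rewrite !inE (neq u w') // orbF => /eqP eu.
have : w \in [set u'; w'] by rewrite -E !inE eqxx orbT.
rewrite !inE eq_sym (neq u' w) // => /eqP ew.
by rewrite eu ew.
Qed.

Lemma PC_eq (T : finType) (E : {set {set T}}) (S1 S2 : {set T}) :
  partial_complement E S1 S2
  = (E :\: [set [set u; w] | u in S1, w in S2]) :|: ([set [set u; w] | u in S1, w in S2] :\: E).
Proof.
rewrite /partial_complement; congr (_ :|: _); apply/setP => f; rewrite !inE.
apply/imset2P/andP.
  case=> u w uS; rewrite !inE => /andP[wS nE] ->; split => //.
  by apply/imset2P; exists u w.
case=> nE /imset2P[u w uS wS ef]; exists u w => //.
by rewrite !inE wS -ef.
Qed.

Lemma gE_upd (T : finType) (E : {set {set T}}) (s1 s2 : T) x b1 b2 :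
  (forall f, f \in E -> (s1 \notin f) && (s2 \notin f)) ->
  gstate E (upd x s1 s2 b1 b2) = gstate E x.
Proof.
move=> hE; rewrite /gstate.
suff -> : [set f in E | f \subset [set v | upd x s1 s2 b1 b2 v]]
       = [set f in E | f \subset [set v | x v]] by [].
apply/setP => f; rewrite !inE; case fE: (f \in E) => //=.
have /andP[n1 n2] := hE f fE.
apply/subsetP/subsetP => h z zf; have := h z zf; rewrite !inE ffunE.
  have -> : (z == s1) = false by apply/negbTE; apply: contraNneq n1 => <-.
  by have -> : (z == s2) = false by apply/negbTE; apply: contraNneq n2 => <-.
have -> : (z == s1) = false by apply/negbTE; apply: contraNneq n1 => <-.
by have -> : (z == s2) = false by apply/negbTE; apply: contraNneq n2 => <-.
Qed.

Lemma disjC (T : finType) (A B : {set {set T}}) (g : {set T} -> bool * bool) (a : bool * bool) :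
  (forall f, f \in A -> g f != a) -> (forall f, f \in B -> g f = a) -> [disjoint A & B].
Proof. by move=> hA hB; apply: disjP => f /hA nf /hB e; rewrite e eqxx in nf. Qed.

Lemma star_mem (T : finType) (S : {set T}) (t z : T) f :
  f \in [set [set v; t] | v in S] -> z != t -> z \notin S -> (t \in f) && (z \notin f).
Proof.
case/imsetP => v vS ->; rewrite !inE eqxx orbT /= => zt zS.
by rewrite negb_or zt andbT; apply: contraNneq zS => ->.
Qed.

Theorem mainTheorem3 (T : finType) (V1 V2 S1 S2 : {set T}) (s1 s2 : T)
    (E : {set {set T}}) :
  [disjoint V1 & V2] ->
  s1 != s2 -> s1 \notin V1 :|: V2 -> s2 \notin V1 :|: V2 ->
  V1 :|: V2 :|: [set s1; s2] = [set: T] ->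
  E \subset [set [set u; w] | u in V1, w in V2] ->
  S1 \subset V1 -> S2 \subset V2 -> S1 != set0 -> S2 != set0 ->
  pauli_LOCC (graphA E S1 S2 s1 s2) s1 s2 (partial_complement E S1 S2) /\
  pauli_LOCC (graphB E S1 S2 s1 s2) s1 s2 (partial_complement E S1 S2).
Proof.
move=> dV ne h1 h2 _ sE sS1 sS2 _ _.
have dS : [disjoint S1 & S2].
  by apply: disjP => z z1 z2; move: (disjointFr dV (subsetP sS1 z z1)); rewrite (subsetP sS2 z z2).
have n1 : forall z, z \in S1 -> (s1 != z) && (s2 != z).
  move=> z /(subsetP sS1) zV; apply/andP; split.
    by apply: contraNneq h1 => ->; rewrite inE zV.
  by apply: contraNneq h2 => ->; rewrite inE zV.
have n2 : forall z, z \in S2 -> (s1 != z) && (s2 != z).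
  move=> z /(subsetP sS2) zV; apply/andP; split.
    by apply: contraNneq h1 => ->; rewrite inE zV orbT.
  by apply: contraNneq h2 => ->; rewrite inE zV orbT.
have s1S1 : s1 \notin S1 by apply/negP => /n1; rewrite eqxx.
have s2S1 : s2 \notin S1 by apply/negP => /n1; rewrite eqxx andbF.
have s1S2 : s1 \notin S2 by apply/negP => /n2; rewrite eqxx.
have s2S2 : s2 \notin S2 by apply/negP => /n2; rewrite eqxx andbF.
have hE : forall f, f \in E -> (s1 \notin f) && (s2 \notin f).
  move=> f /(subsetP sE) /imset2P[u w uV wV ->].
  rewrite !inE !negb_or.
  have ne1 : forall z, z \in V1 :|: V2 -> (s1 != z) && (s2 != z).
    move=> z zV; apply/andP; split.
      by apply: contraNneq h1 => ->.
    by apply: contraNneq h2 => ->.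
  have /andP[-> ->] : (s1 != u) && (s2 != u) by apply: ne1; rewrite inE uV.
  by have /andP[-> ->] : (s1 != w) && (s2 != w) by apply: ne1; rewrite inE wV orbT.
pose cls (f : {set T}) := (s1 \in f, s2 \in f).
have cE : forall f, f \in E -> cls f = (false, false).
  by move=> f /hE /andP[/negbTE a /negbTE b]; rewrite /cls a b.
have cK : forall f, f \in [set [set s1; s2]] -> cls f = (true, true).
  by move=> f /set1P ->; rewrite /cls !inE !eqxx orbT.
have cstar : forall (S : {set T}) t z f, f \in [set [set v; t] | v in S] -> z != t -> z \notin S ->
   (t \in f) && (z \notin f) by move=> S t z f; apply: star_mem.
have hPC : forall y, gstate (partial_complement E S1 S2) y
   = gstate E y * (-1) ^+ (cntb S1 y && cntb S2 y).
  by move=> y; rewrite PC_eq sgn_symdiff sgn_K.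
have gEu : forall x b1 b2, gstate E (upd x s1 s2 b1 b2) = gstate E x.
  by move=> x b1 b2; apply: gE_upd.
have e12 : s2 != s1 by rewrite eq_sym.
split.
- apply: (gen_LOCC (R1 := S1) (R2 := S2) (gE := gstate E)) => //.
  move=> y; rewrite /graphA.
  have cA : forall f, f \in [set [set v; s2] | v in S1] -> cls f = (false, true).
    by move=> f /cstar /(_ ne s1S1) /andP[a /negbTE b]; rewrite /cls a b.
  have cB : forall f, f \in [set [set v; s1] | v in S2] -> cls f = (true, false).
    by move=> f /cstar /(_ e12 s2S2) /andP[a /negbTE b]; rewrite /cls a b.
  rewrite sgnU; last first.
    apply: (disjC (g := cls) (a := (true, false))) => // f.
    by rewrite !in_setU => /orP[/orP[/cE|/cK]|/cA] ->.
  rewrite sgnU; last first.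
    apply: (disjC (g := cls) (a := (false, true))) => // f.
    by rewrite !in_setU => /orP[/cE|/cK] ->.
  rewrite sgnU; last first.
    apply: (disjC (g := cls) (a := (true, true))) => // f.
    by move/cE ->.
  rewrite sgn1 !sgn_star // subUset !sub1set !inE.
  by rewrite /cntb.
- apply: (gen_LOCC (R1 := S2) (R2 := S1) (gE := gstate E)) => //.
  1: by rewrite disjoint_sym.
  2: by move=> y; rewrite hPC andbC.
  move=> y; rewrite /graphB.
  have cA : forall f, f \in [set [set v; s1] | v in S1] -> cls f = (true, false).
    by move=> f /cstar /(_ e12 s2S1) /andP[a /negbTE b]; rewrite /cls a b.
  have cB : forall f, f \in [set [set v; s2] | v in S2] -> cls f = (false, true).
    by move=> f /cstar /(_ ne s1S2) /andP[a /negbTE b]; rewrite /cls a b.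
  rewrite sgnU; last first.
    apply: (disjC (g := cls) (a := (false, true))) => // f.
    by rewrite !in_setU => /orP[/orP[/cE|/cK]|/cA] ->.
  rewrite sgnU; last first.
    apply: (disjC (g := cls) (a := (true, false))) => // f.
    by rewrite !in_setU => /orP[/cE|/cK] ->.
  rewrite sgnU; last first.
    apply: (disjC (g := cls) (a := (true, true))) => // f.
    by move/cE ->.
  rewrite sgn1 !sgn_star // subUset !sub1set !inE.
  rewrite /cntb; ring.
Qed.
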